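(* Let $k:\mathbb R\to[0,\infty)$ be continuous with $\int_{\mathbb R}k(x)\,dx=1$, satisfying (K1) there is $\lambda>0$ with $\int_{\mathbb R}k(x)e^{\lambda|x|}dx<+\infty$, and (K2) $k(x_1)>0$ and $k(x_2)>0$ for some $x_1>0$, $x_2<0$. Let $f\in C^1([0,1])$ satisfy (H): $f(0)=f(1)=0$, $f(u)>0$ for $u\in(0,1)$, $f'(0)>0$, and $f(u)\leqslant f'(0)u$ for $u\in(0,1)$. Define \[ c_l^*=\sup_{\lambda<0}\Big\{\lambda^{-1}\Big[\int_{\mathbb R}k(x)e^{\lambda x}dx-1+f'(0)\Big]\Big\},\qquad c_r^*=\inf_{\lambda>0}\Big\{\lambda^{-1}\Big[\int_{\mathbb R}k(x)e^{\lambda x}dx-1+f'(0)\Big]\Big\}, \] and $E(k)=\operatorname{sign}(J(k))\big[1-\inf_{\lambda\in\mathbb R}\int_{\mathbb R}k(x)e^{\lambda x}dx\big]$ with $J(k)=\int_{\mathbb R}k(x)x\,dx$. Then: (i) if $E(k)>f'(0)$, then $0<c_l^*<c_r^*$; (ii) if $E(k)=f'(0)$, then $0=c_l^*<c_r^*$; (iii) if $-f'(0)<E(k)<f'(0)$, then $c_l^*<0<c_r^*$; (iv) if $E(k)=-f'(0)$, then $c_l^*<c_r^*=0$; (v) if $E(k)<-f'(0)$, then $c_l^*<c_r^*<0$.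
   Context: $\operatorname{sign}(0)=0$. When $\int_{\mathbb R}k(x)e^{\lambda x}dx=+\infty$ the bracketed expressions are $+\infty$. The quantities $c_l^*$ and $c_r^*$ are the spreading speeds to the left and to the right of the equation $u_t=\int_{\mathbb R}k(x-y)u(t,y)dy-u+f(u)$. *)

(* Defs.v *)
From HB Require Import structures.
From mathcomp Require Import all_boot all_order all_algebra.
From mathcomp Require Import all_classical all_reals all_analysis.
Set Implicit Arguments. Unset Strict Implicit. Unset Printing Implicit Defensive.
Import Order.TTheory GRing.Theory Num.Theory.
Import numFieldNormedType.Exports.
Local Open Scope classical_set_scope.
Local Open Scope ring_scope.

Section Defs.
Variable R : realType.

Definition kM (k : R -> R) (lam : R) : \bar R :=
  (\int[lebesgue_measure]_x (k x * expR (lam * x))%:E)%E.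

Definition Jk (k : R -> R) : R := Rintegral lebesgue_measure setT (fun x => k x * x).

Definition Ek (k : R -> R) : R :=
  Num.sg (Jk k) * (1 - fine (ereal_inf [set kM k lam | lam in [set: R]])).

Definition speed_expr (k : R -> R) (a lam : R) : \bar R :=
  ((lam^-1)%:E * (kM k lam - 1%:E + a%:E))%E.

Definition c_left (k : R -> R) (a : R) : \bar R :=
  ereal_sup [set speed_expr k a lam | lam in [set lam : R | lam < 0]].

Definition c_right (k : R -> R) (a : R) : \bar R :=
  ereal_inf [set speed_expr k a lam | lam in [set lam : R | 0 < lam]].

(* fp is the derivative of f on [0,1] (one-sided at the endpoints),
   and fp is continuous on [0,1]: f is C^1([0,1]) with f' = fp *)
Definition C1_01 (f fp : R -> R) : Prop :=
  (forall x, 0 <= x <= 1 ->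
     (fun h => (f (x + h) - f x) / h) @
        within [set h : R | h != 0 /\ 0 <= x + h <= 1] (nbhs (0:R)) --> fp x)
  /\ {within `[0, 1], continuous fp}.
End Defs.

(* Main.v *)
Require Import Defs.
From HB Require Import structures.
From mathcomp Require Import all_boot all_order all_algebra.
From mathcomp Require Import all_classical all_reals all_analysis.
From mathcomp Require Import ring lra measurable_realfun.
Import Order.TTheory GRing.Theory Num.Theory.
Import numFieldNormedType.Exports.
Local Open Scope classical_set_scope.
Local Open Scope ring_scope.

Section Half.
Variable R : realType.
Definition sp (M : R -> \bar R) (a l : R) : \bar R :=
  ((l^-1)%:E * (M l - 1%:E + a%:E))%E.

Lemma sp_fin M a l r : M l = r%:E -> sp M a l = ((r - 1 + a) / l)%:E.
Proof. by move=> h; rewrite /sp h -EFinB -EFinD -EFinM mulrC. Qed.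

Lemma sp_infN M a l : l < 0 -> M l = +oo%E -> sp M a l = -oo%E.
Proof.
move=> hl h; rewrite /sp h /= mulry.
by rewrite ltr0_sg ?invr_lt0 // EFinN mulN1e.
Qed.

Lemma sp_infP M a l : 0 < l -> M l = +oo%E -> sp M a l = +oo%E.
Proof.
move=> hl h; rewrite /sp h /= mulry.
by rewrite gtr0_sg ?invr_gt0 // mul1e.
Qed.

Lemma Mfin (M : R -> \bar R) (J l : R) : ((1 + l * J)%:E <= M l)%E ->
  (M l = +oo)%E \/ exists r, M l = r%:E /\ 1 + l * J <= r.
Proof.
case E: (M l) => [r| |] h; [right; exists r; split => //| by left| by []].
Qed.

Lemma half_L1 (M : R -> \bar R) (J a : R) : 0 < a ->
  (forall l, ((1 + l * J)%:E <= M l)%E) ->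
  (forall B, exists2 L, 0 < L & forall l, l <= - L -> ((1 - B * l)%:E <= M l)%E) ->
  (ereal_sup [set sp M a l | l in [set l | (l < 0)%R]] < J%:E)%E.
Proof.
move=> ha hJ hg.
have [L hL hLg] := hg (1 - J).
pose d := Num.min 1 (a / L).
have d0 : 0 < d by rewrite lt_min ltr01 divr_gt0.
have d1 : d <= 1 by rewrite ge_min lexx.
have dL : d * L <= a.
  by rewrite -ler_pdivlMr // ge_min lexx orbT.
apply: (@le_lt_trans _ _ (J - d)%:E); last by rewrite lte_fin; lra.
apply/ereal_supP => _ [l /= hl <-].
have [h|[r [h hr]]] := Mfin _ _ _ (hJ l).
  by rewrite (sp_infN M a l hl h) leNye.
rewrite (sp_fin M a l r h) lee_fin ler_ndivrMr //.
have [hlL|hlL] := leP l (- L).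
  have := hLg l hlL; rewrite h lee_fin => h2; nra.
nra.
Qed.

Lemma half_L2 (M : R -> \bar R) (J a : R) : 0 < a -> 0 < J ->
  (forall l, ((1 + l * J)%:E <= M l)%E) ->
  (ereal_inf [set M l | l in [set: R]] < (1 - a)%:E)%E ->
  (0%:E < ereal_sup [set sp M a l | l in [set l | (l < 0)%R]])%E.
Proof.
move=> ha hJ0 hJ hm.
have [_ [l _ <-] hl] := ereal_inf_lt hm.
have [h|[r [h hr]]] := Mfin _ _ _ (hJ l); first by rewrite h in hl.
rewrite h lte_fin in hl.
have l0 : l < 0 by nra.
apply: (@lt_le_trans _ _ (sp M a l)); last by apply: ereal_sup_ubound; exists l.
rewrite (sp_fin M a l r h) lte_fin.
by rewrite (lter_ndivlMr R).2 // mul0r; lra.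
Qed.

Lemma half_L3 (M : R -> \bar R) (J a : R) : 0 < a -> 0 < J ->
  (forall l, ((1 + l * J)%:E <= M l)%E) ->
  (ereal_inf [set M l | l in [set: R]] = (1 - a)%:E)%E ->
  (ereal_sup [set sp M a l | l in [set l | (l < 0)%R]] = 0%:E)%E.
Proof.
move=> ha hJ0 hJ hm.
set cl := ereal_sup _.
have cl_le : (cl <= 0%:E)%E.
  apply/ereal_supP => _ [l /= hl <-].
  have [h|[r [h hr]]] := Mfin _ _ _ (hJ l).
    by rewrite (sp_infN M a l hl h) leNye.
  have : (ereal_inf [set M l | l in [set: R]] <= M l)%E.
    by apply: ereal_inf_lbound; exists l.
  rewrite hm h lee_fin => hr2.
  by rewrite (sp_fin M a l r h) lee_fin ler_ndivrMr // mul0r; lra.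
have cl_ge : forall e, 0 < e -> ((- e)%:E <= cl)%E.
  move=> e he.
  pose dl := Num.min (a / 2) (e * a / (2 * J)).
  have dl0 : 0 < dl by rewrite lt_min !divr_gt0 ?mulr_gt0.
  have dl1 : dl <= a / 2 by rewrite ge_min lexx.
  have dl2 : dl * (2 * J) <= e * a.
    by rewrite -ler_pdivlMr ?mulr_gt0 // ge_min lexx orbT.
  have : (ereal_inf [set M l | l in [set: R]] < (1 - a + dl)%:E)%E.
    by rewrite hm lte_fin; lra.
  move=> /ereal_inf_lt [_ [l _ <-] hl].
  have [h|[r [h hr]]] := Mfin _ _ _ (hJ l); first by rewrite h in hl.
  rewrite h lte_fin in hl.
  have l0 : l < 0 by nra.
  apply: (@le_trans _ _ (sp M a l)); last by apply: ereal_sup_ubound; exists l.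
  rewrite (sp_fin M a l r h) lee_fin ler_ndivlMr //.
  have h1 : (r - 1 + a) * (2 * J) < dl * (2 * J) by rewrite ltr_pM2r ?mulr_gt0 //; lra.
  have h2 : 2 * l * J < - a by nra.
  have h3 : e * a < e * (- 2 * l * J) by rewrite ltr_pM2l //; lra.
  nra.
apply/eqP; rewrite eq_le cl_le /=.
move: cl_ge cl_le; case: cl => [r| |] //=.
- move=> hge; rewrite !lee_fin => hr; rewrite leNgt; apply/negP => hr0.
  have := hge (- r / 2); rewrite lee_fin; lra.
- by move=> hge _; have := hge 1 ltr01.
Qed.

Lemma half_L4 (M : R -> \bar R) (J a : R) : 0 < a -> M 0 = 1%:E ->
  (forall l, ((1 + l * J)%:E <= M l)%E) ->
  (forall B, exists2 L, 0 < L & forall l, l <= - L -> ((1 - B * l)%:E <= M l)%E) ->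
  ((1 - a)%:E < ereal_inf [set M l | l in [set: R]])%E ->
  (ereal_sup [set sp M a l | l in [set l | (l < 0)%R]] < 0%:E)%E.
Proof.
move=> ha hM0 hJ hg hm.
have m1 : (ereal_inf [set M l | l in [set: R]] <= 1%:E)%E.
  by rewrite -hM0; apply: ereal_inf_lbound; exists 0.
move: hm m1; set m := ereal_inf _; case E: m => [mu| |] //= hm m1.
rewrite lte_fin in hm.
have [L hL hLg] := hg 1.
pose g := mu - 1 + a.
have g0 : 0 < g by rewrite /g; lra.
pose d := Num.min 1 (g / L).
have d0 : 0 < d by rewrite lt_min ltr01 divr_gt0.
have d1 : d <= 1 by rewrite ge_min lexx.
have dL : d * L <= g.
  by rewrite -ler_pdivlMr // ge_min lexx orbT.
apply: (@le_lt_trans _ _ (- d)%:E); last by rewrite lte_fin; lra.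
apply/ereal_supP => _ [l /= hl <-].
have [h|[r [h hr]]] := Mfin _ _ _ (hJ l).
  by rewrite (sp_infN M a l hl h) leNye.
have : (m <= M l)%E by apply: ereal_inf_lbound; exists l.
rewrite E h lee_fin => hr2.
rewrite (sp_fin M a l r h) lee_fin ler_ndivrMr //.
have [hlL|hlL] := leP l (- L).
  have := hLg l hlL; rewrite h lee_fin => h3; nra.
rewrite /g in dL; nra.
Qed.

Lemma refl_sup (M : R -> \bar R) a :
  ereal_sup [set sp (fun l => M (- l)) a l | l in [set l | (l < 0)%R]] =
  (- ereal_inf [set sp M a l | l in [set l | (0 < l)%R]])%E.
Proof.
rewrite /ereal_inf oppeK; congr ereal_sup.
apply/seteqP; split => x /=.
- move=> [l hl <-]; exists (sp M a (- l)); first by exists (- l) => //=; lra.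
  by rewrite /sp invrN EFinN mulNe oppeK.
- move=> [_ [l hl <-] <-]; exists (- l); first by rewrite /=; lra.
  by rewrite /sp opprK invrN EFinN mulNe.
Qed.

Lemma refl_inf (M : R -> \bar R) :
  ereal_inf [set M (- l) | l in [set: R]] = ereal_inf [set M l | l in [set: R]].
Proof.
congr ereal_inf; apply/seteqP; split => x /= [l _ <-].
- by exists (- l).
- by exists (- l) => //; rewrite opprK.
Qed.

Lemma abstract_main (M : R -> \bar R) (J a : R) : 0 < a -> M 0 = 1%:E ->
  (forall l, (0%:E <= M l)%E) ->
  (forall l, ((1 + l * J)%:E <= M l)%E) ->
  (forall B, exists2 L, 0 < L & forall l, l <= - L -> ((1 - B * l)%:E <= M l)%E) ->
  (forall B, exists2 L, 0 < L & forall l, L <= l -> ((1 + B * l)%:E <= M l)%E) ->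
  let cl := ereal_sup [set sp M a l | l in [set l | (l < 0)%R]] in
  let cr := ereal_inf [set sp M a l | l in [set l | (0 < l)%R]] in
  let E := Num.sg J * (1 - fine (ereal_inf [set M l | l in [set: R]])) in
  [/\ a < E -> (0%:E < cl /\ cl < cr)%E,
      E = a -> (cl = 0%:E /\ cl < cr)%E,
      - a < E < a -> (cl < 0%:E /\ 0%:E < cr)%E,
      E = - a -> (cl < cr /\ cr = 0%:E)%E
    & E < - a -> (cl < cr /\ cr < 0%:E)%E].
Proof.
move=> ha hM0 hM hJ hgN hgP cl cr E.
pose M' := fun l => M (- l).
have hJ' : forall l, ((1 + l * (- J))%:E <= M' l)%E.
  by move=> l; rewrite /M' mulrN -mulNr.
have hgN' : forall B, exists2 L, 0 < L & forall l, l <= - L -> ((1 - B * l)%:E <= M' l)%E.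
  move=> B; have [L hL hLg] := hgP B; exists L => // l hl.
  rewrite /M' (_ : 1 - B * l = 1 + B * (- l)); last by rewrite mulrN.
  by apply: hLg; lra.
have hM0' : M' 0 = 1%:E by rewrite /M' oppr0.
have hcr : ereal_sup [set sp M' a l | l in [set l | (l < 0)%R]] = (- cr)%E.
  exact: refl_sup.
have hm' : ereal_inf [set M' l | l in [set: R]] = ereal_inf [set M l | l in [set: R]].
  exact: refl_inf.
have clJ : (cl < J%:E)%E by apply: half_L1.
have Jcr : (J%:E < cr)%E.
  have := half_L1 M' (- J) a ha hJ' hgN'; rewrite hcr EFinN lteN2 //.
have clcr : (cl < cr)%E by apply: (lt_trans clJ Jcr).
rewrite /E; clear E.
have m1 : (ereal_inf [set M l | l in [set: R]] <= 1%:E)%E.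
  by rewrite -hM0; apply: ereal_inf_lbound; exists 0.
have m0 : (0%:E <= ereal_inf [set M l | l in [set: R]])%E.
  by apply/ereal_infP => _ [l _ <-].
move: m1 m0 hm'; case Em: (ereal_inf [set M l | l in [set: R]]) => [mu| |] //= m1 m0 hm'.
rewrite lee_fin in m1; rewrite lee_fin in m0.
have [J0|J0|J0] := ltgtP J 0.
- rewrite (ltr0_sg J0) mulN1r.
  split.
  + by move=> h; exfalso; lra.
  + by move=> h; exfalso; lra.
  + move=> /andP[h1 h2]; split; first by apply: (lt_trans clJ); rewrite lte_fin.
    have := half_L4 M' (- J) a ha hM0' hJ' hgN'; rewrite hcr hm' lte_fin => /(_ ltac:(lra)).
    by rewrite lteNl oppe0.
  + move=> h; split => //.
    have := half_L3 M' (- J) a ha _ hJ' ; rewrite hcr hm' => /(_ ltac:(lra)) /(_ ltac:(congr EFin; lra)).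
    by move/eqP; rewrite eqe_oppLR oppe0 => /eqP.
  + move=> h; split => //.
    have := half_L2 M' (- J) a ha _ hJ'; rewrite hcr hm' lte_fin => /(_ ltac:(lra) ltac:(lra)).
    by rewrite lteNr oppe0.
- rewrite (gtr0_sg J0) mul1r.
  split.
  + move=> h; split => //; apply: (half_L2 M J a) => //; rewrite Em lte_fin; lra.
  + move=> h; split => //; apply: (half_L3 M J a) => //; rewrite Em; congr EFin; lra.
  + move=> /andP[h1 h2]; split; last by apply: (@lt_trans _ _ J%:E) => //; rewrite lte_fin.
    by apply: (half_L4 M J a ha hM0 hJ hgN); rewrite Em lte_fin; lra.
  + by move=> h; exfalso; lra.
  + by move=> h; exfalso; lra.
- rewrite J0 sgr0 mul0r.
  split; try by move=> h; exfalso; lra.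
  move=> _; split.
  + by move: clJ; rewrite J0.
  + by move: Jcr; rewrite J0.
Qed.
End Half.

Section An.
Variable R : realType.

Lemma kexp_cont (k : R -> R) (l : R) : continuous k ->
  continuous (fun x => k x * expR (l * x)).
Proof.
move=> hk x; apply: cvgM; first exact: hk.
apply: continuous_comp; last exact: continuous_expR.
by apply: cvgM; [exact: cvg_cst | exact: cvg_id].
Qed.

Lemma kexp_meas (k : R -> R) (l : R) : continuous k ->
  measurable_fun [set: R] (EFin \o (fun x => k x * expR (l * x))).
Proof.
move=> hk; apply/measurable_EFinP.
exact: (continuous_measurable_fun (kexp_cont k l hk)).
Qed.

Lemma kM0 (k : R -> R) : (\int[lebesgue_measure]_x (k x)%:E = 1%:E)%E ->
  kM k 0 = 1%:E.
Proof.
move=> h; rewrite /kM -h; congr integral; apply: funext => x.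
by rewrite mul0r expR0 mulr1.
Qed.

Lemma kM_ge0 (k : R -> R) l : (forall x, 0 <= k x) -> (0%:E <= kM k l)%E.
Proof.
move=> k0; apply: integral_ge0 => x _; rewrite lee_fin.
by apply: mulr_ge0 => //; apply: ltW; apply: expR_gt0.
Qed.

Lemma growth_pt (k : R -> R) x0 : continuous k -> (forall x, 0 <= k x) ->
  x0 != 0 -> 0 < k x0 ->
  exists2 C, 0 < C & forall l, 0 <= l * x0 ->
    ((C * expR (l * (x0 / 2)))%:E <= kM k l)%E.
Proof.
move=> hk k0 x00 kx0.
have := hk x0 => /cvgrPdist_lt /(_ (k x0 / 2)) /(_ ltac:(by rewrite divr_gt0)).
move=> /nbhs_ballP [e e0 he].
pose eta := Num.min e (`|x0| / 2).
have eta0 : 0 < eta by rewrite lt_min e0 divr_gt0 // normr_gt0.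
have etae : eta <= e by rewrite ge_min lexx.
have etax : eta <= `|x0| / 2 by rewrite ge_min lexx orbT.
pose B := ball x0 eta.
have mB : measurable B by rewrite /B ball_itv; exact: measurable_itv.
exists (k x0 / 2 * (eta *+ 2)); first by rewrite mulr_gt0 ?divr_gt0 // mulrn_wgt0.
move=> l hl.
set c := k x0 / 2 * expR (l * (x0 / 2)).
have c0 : 0 <= c by rewrite mulr_ge0 // ?divr_ge0 // ?ltW // expR_gt0.
have -> : (k x0 / 2 * (eta *+ 2) * expR (l * (x0 / 2)))%:E =
    (\int[lebesgue_measure]_x (c * \1_B x)%:E)%E.
  have hZ := @integralZl_indic _ _ _ (@lebesgue_measure R) setT measurableT (fun _ => B) c.
  rewrite /= in hZ; rewrite hZ //; last first.
    by move=> /lt_le_trans/(_ c0); rewrite ltxx.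
  rewrite integral_indic // setIT /B.
  transitivity (c%:E * (eta *+ 2)%:E)%E; last first.
    have hb := lebesgue_measure_ball x0 (ltW eta0).
    by congr (_ * _)%E; exact: (esym hb).
  rewrite -EFinM /c; congr EFin; ring.
apply: ge0_le_integral => //.
- by move=> x _; rewrite lee_fin mulr_ge0.
- by apply/measurable_EFinP; apply: measurable_funM.
- apply/measurable_EFinP; apply: continuous_measurable_fun; exact: kexp_cont.
- move=> x _; rewrite lee_fin indicE.
  have [hx|hx] := pselect (B x); last first.
    by rewrite memNset // mulr0 mulr_ge0 // ltW // expR_gt0.
  rewrite mem_set // mulr1 /c.
  have hxb : `|x0 - x| < eta by move: hx; rewrite /B /ball /=.
  have hke : `|k x0 - k x| < k x0 / 2.
    by apply: he; rewrite /ball /=; apply: lt_le_trans etae.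
  have hkx : k x0 / 2 <= k x.
    move: hke; rewrite ltr_distlC => /andP[h1 h2]; lra.
  apply: ler_pM; [by rewrite divr_ge0 // ltW | by apply/ltW/expR_gt0 | exact: hkx | ].
  rewrite ler_expR.
  move: hxb; rewrite ltr_distlC => /andP[h1 h2].
  have [xp|xn] := ltP 0 x0.
    move: etax; rewrite gtr0_norm // => etax.
    have l0 : 0 <= l by rewrite -(pmulr_lge0 _ xp).
    nra.
  have xn' : x0 < 0 by rewrite lt_neqAle x00 xn.
  move: etax; rewrite ltr0_norm // => etax.
  have l0 : l <= 0 by rewrite -(nmulr_lge0 _ xn').
  nra.
Qed.

Lemma superlin (C b : R) : 0 < C -> 0 < b -> forall B,
  exists2 L, 0 < L & forall t, L <= t -> 1 + B * t <= C * expR (t * b).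
Proof.
move=> C0 b0 B.
pose D := 4 * (1 + `|B|) / (C * b ^+ 2).
have D0 : 0 <= D by rewrite /D divr_ge0 // ?mulr_ge0 // ?ltW // ?exprn_gt0 // addr_gt0.
exists (1 + D); first by lra.
move=> t ht.
have t1 : 1 <= t by lra.
have hD : D * (C * b ^+ 2) = 4 * (1 + `|B|).
  by rewrite /D mulfVK // mulf_neq0 ?gt_eqF // exprn_gt0.
have hCt : 4 * (1 + `|B|) <= t * (C * b ^+ 2).
  rewrite -hD ler_pM2r ?mulr_gt0 ?exprn_gt0 //; lra.
have he : expR (t * b) = expR (t * b / 2) * expR (t * b / 2).
  by rewrite -expRD; congr expR; field.
have hu : 1 + t * b / 2 <= expR (t * b / 2) by apply: expR_ge1Dx.
have u0 : 0 <= t * b / 2 by rewrite divr_ge0 // mulr_ge0 //; lra.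
have hsq : (t * b / 2) * (t * b / 2) <= expR (t * b).
  rewrite he; apply: ler_pM => //; lra.
have hB : B <= `|B| := ler_norm B.
have h1 : 1 + B * t <= (1 + `|B|) * t by nra.
have h2 : (1 + `|B|) * t <= C * ((t * b / 2) * (t * b / 2)).
  rewrite expr2 in hCt; nra.
have h3 : C * ((t * b / 2) * (t * b / 2)) <= C * expR (t * b).
  by rewrite ler_pM2l.
lra.
Qed.

Lemma jensen (k : R -> R) : continuous k -> (forall x, 0 <= k x) ->
  (\int[lebesgue_measure]_x (k x)%:E = 1%:E)%E ->
  (exists2 lam : R, 0 < lam &
     (\int[lebesgue_measure]_x (k x * expR (lam * `|x|))%:E < +oo)%E) ->
  forall l, ((1 + l * Jk k)%:E <= kM k l)%E.
Proof.
move=> hk k0 k1 [lam lam0 hlam] l.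
have ik : lebesgue_measure.-integrable setT (EFin \o k).
  apply/integrableP; split.
    by apply/measurable_EFinP; apply: continuous_measurable_fun.
  under eq_integral => x _ do rewrite /= ger0_norm //.
  by rewrite k1 ltry.
have klam_c : continuous (fun x => k x * expR (lam * `|x|)).
  move=> x; apply: cvgM; first exact: hk.
  apply: continuous_comp; last exact: continuous_expR.
  apply: cvgM; first exact: cvg_cst.
  exact: norm_continuous.
have iklam : lebesgue_measure.-integrable setT (EFin \o (fun x => k x * expR (lam * `|x|))).
  apply/integrableP; split.
    by apply/measurable_EFinP; apply: continuous_measurable_fun.
  under eq_integral => x _ do rewrite /= ger0_norm ?mulr_ge0 // ?ltW ?expR_gt0 //.
  exact: hlam.
have ikx : lebesgue_measure.-integrable setT (EFin \o (fun x => k x * x)).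
  apply: (le_integrable measurableT _ _ (integrableZl measurableT lam^-1 iklam)).
    apply/measurable_EFinP; apply: continuous_measurable_fun.
    by move=> x; apply: cvgM; [exact: hk | exact: cvg_id].
  move=> x _; rewrite /= lee_fin.
  rewrite (ger0_norm (_ : 0 <= lam^-1 * (k x * expR (lam * `|x|)))); last first.
    by rewrite mulr_ge0 ?invr_ge0 ?mulr_ge0 // ?ltW // expR_gt0.
  rewrite normrM (ger0_norm (k0 x)).
  rewrite mulrCA ler_wpM2l //.
  rewrite ler_pdivlMl //.
  have := expR_ge1Dx (lam * `|x|); lra.
have hJ : (\int[lebesgue_measure]_x (k x * x)%:E)%E = (Jk k)%:E.
  by rewrite /Jk /Rintegral fineK //; apply: integrable_fin_num.
case E: (kM k l) => [r| |]; last 2 first.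
- exact: leey.
- have := kM_ge0 k l k0; rewrite E //.
have ikl : lebesgue_measure.-integrable setT (EFin \o (fun x => k x * expR (l * x))).
  apply/integrableP; split; first exact: kexp_meas.
  under eq_integral => x _ do rewrite /= ger0_norm ?mulr_ge0 // ?ltW ?expR_gt0 //.
  by move: E; rewrite /kM => ->; rewrite ltry.
rewrite -E /kM.
have -> : (1 + l * Jk k)%:E =
   (\int[lebesgue_measure]_x ((EFin \o k) x + (l%:E * (EFin \o (fun x => (k x * x)%R)) x))%E)%E.
  rewrite integralD //; last exact: integrableZl.
  rewrite integralZl // hJ k1 -EFinM -EFinD //.
apply: le_integral => //.
  by apply: integrableD => //; apply: integrableZl.
move=> x _; rewrite /= -EFinM -EFinD lee_fin.
rewrite mulrCA -{1}(mulr1 (k x)) -mulrDr ler_wpM2l //.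
exact: expR_ge1Dx.
Qed.

Lemma growthP (k : R -> R) : continuous k -> (forall x, 0 <= k x) ->
  (exists2 x1 : R, 0 < x1 & 0 < k x1) ->
  forall B, exists2 L, 0 < L & forall l, L <= l -> ((1 + B * l)%:E <= kM k l)%E.
Proof.
move=> hk k0 [x1 x10 kx1] B.
have [C C0 hC] := growth_pt k x1 hk k0 (lt0r_neq0 x10) kx1.
have b0 : 0 < x1 / 2 by rewrite divr_gt0.
have [L L0 hL] := superlin C (x1 / 2) C0 b0 B.
exists L => // l hl.
apply: le_trans (hC l _); last by rewrite mulr_ge0 //; lra.
by rewrite lee_fin; apply: hL.
Qed.

Lemma growthN (k : R -> R) : continuous k -> (forall x, 0 <= k x) ->
  (exists2 x2 : R, x2 < 0 & 0 < k x2) ->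
  forall B, exists2 L, 0 < L & forall l, l <= - L -> ((1 - B * l)%:E <= kM k l)%E.
Proof.
move=> hk k0 [x2 x20 kx2] B.
have [C C0 hC] := growth_pt k x2 hk k0 (ltr0_neq0 x20) kx2.
have b0 : 0 < - (x2 / 2) by lra.
have [L L0 hL] := superlin C (- (x2 / 2)) C0 b0 B.
exists L => // l hl.
apply: le_trans (hC l _); last by nra.
rewrite lee_fin.
have := hL (- l) ltac:(lra).
by rewrite mulrNN mulrN.
Qed.
End An.

Theorem theorem2p4 (R : realType) (k f fp : R -> R) :
  continuous k ->
  (forall x, 0 <= k x) ->
  (\int[lebesgue_measure]_x (k x)%:E = 1%:E)%E ->
  (exists2 lam : R, 0 < lam &
     (\int[lebesgue_measure]_x (k x * expR (lam * `|x|))%:E < +oo)%E) ->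
  (exists2 x1 : R, 0 < x1 & 0 < k x1) ->
  (exists2 x2 : R, x2 < 0 & 0 < k x2) ->
  C1_01 f fp ->
  f 0 = 0 -> f 1 = 0 ->
  (forall u, 0 < u < 1 -> 0 < f u) ->
  0 < fp 0 ->
  (forall u, 0 < u < 1 -> f u <= fp 0 * u) ->
  let cl := c_left k (fp 0) in
  let cr := c_right k (fp 0) in
  let E := Ek k in
  [/\ fp 0 < E -> (0%:E < cl /\ cl < cr)%E,
      E = fp 0 -> (cl = 0%:E /\ cl < cr)%E,
      - fp 0 < E < fp 0 -> (cl < 0%:E /\ 0%:E < cr)%E,
      E = - fp 0 -> (cl < cr /\ cr = 0%:E)%E
    & E < - fp 0 -> (cl < cr /\ cr < 0%:E)%E].
Proof.
move=> hk k0 k1 hK1 hx1 hx2 _ _ _ _ ha _.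
have H := @abstract_main R (kM k) (Jk k) (fp 0) ha (@kM0 R k k1) (fun l => @kM_ge0 R k l k0)
  (@jensen R k hk k0 k1 hK1) (@growthN R k hk k0 hx2) (@growthP R k hk k0 hx1).
exact H.
Qed.
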